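(* Let $H$ and $K$ be finite groups that admit no common nonabelian simple quotient (i.e., there is no nonabelian simple group that is isomorphic to a quotient of $H$ and also to a quotient of $K$). Then $\mathrm{MaxDim}(H \times K) = \mathrm{MaxDim}(H) + \mathrm{MaxDim}(K)$.
   Context: All groups are finite. A finite set $\{H_1,\dots,H_n\}$ of subgroups of a group $G$ is in general position if for every $1 \le j \le n$, $\bigcap_{i \neq j} H_i \supsetneq \bigcap_{i} H_i$. $\mathrm{MaxDim}(G)$ is the largest cardinality of a collection of maximal subgroups of $G$ that is in general position. *)

(* Defs.v *)
From mathcomp Require Import all_boot all_fingroup all_solvable.
Set Implicit Arguments. Unset Strict Implicit. Unset Printing Implicit Defensive.
Local Open Scope group_scope.

(* Intersections are taken
   inside the ambient group G (so the empty intersection is G). *)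
Definition gen_pos (gT : finGroupType) (G : {set gT}) (S : {set {group gT}}) : bool :=
  [forall M in S,
     (G :&: \bigcap_(L in S) (L : {set gT}))
       \proper (G :&: \bigcap_(L in S :\ M) (L : {set gT}))].

Definition MaxDim (gT : finGroupType) (G : {set gT}) : nat :=
  \max_(S : {set {group gT}} |
          (S \subset [set M : {group gT} | maximal M G]) && gen_pos G S) #|S|.

Definition common_nonab_simple_quotient (gT1 gT2 : finGroupType)
    (H : {group gT1}) (K : {group gT2}) : Prop :=
  exists (N1 : {group gT1}) (N2 : {group gT2}),
    [/\ N1 <| H, N2 <| K, simple (H / N1), ~~ abelian (H / N1)
      & (H / N1) \isog (K / N2)].

(* Main.v *)
Require Import Defs.
From mathcomp Require Import all_boot all_fingroup all_solvable.
Set Implicit Arguments. Unset Strict Implicit. Unset Printing Implicit Defensive.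
Local Open Scope group_scope.

Lemma genposP (gT : finGroupType) (G : {set gT}) (S : {set {group gT}}) :
  gen_pos G S <-> (forall M, M \in S -> exists g, [/\ g \in G, g \notin M &
      forall L, L \in S -> L != M -> g \in L]).
Proof.
split.
- move=> /forallP HS M MS; have := HS M; rewrite MS /= => /properP [_ [g gin gnot]].
  rewrite inE in gin; case/andP: gin => gG /bigcapP gL.
  exists g; split => //.
    apply: contra gnot => gM; rewrite inE gG; apply/bigcapP => L LS.
    case: (eqVneq L M) => [->//|ne]; apply: gL; by rewrite !inE ne.
  by move=> L LS ne; apply: gL; rewrite !inE ne.
- move=> HS; apply/forallP => M; apply/implyP => MS.
  case: (HS M MS) => g [gG gM gL].
  apply/properP; split.
    apply: setIS; apply/bigcapsP => L; rewrite !inE => /andP[_ LS].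
    exact: bigcap_inf.
  exists g.
    rewrite inE gG; apply/bigcapP => L; rewrite !inE => /andP[ne LS]; exact: gL.
  rewrite inE gG /=; apply/negP => /bigcapP /(_ M MS); by rewrite (negbTE gM).
Qed.

Lemma maxnormal_pow (gT : finGroupType) (G M : {group gT}) g x :
  maximal M G -> M <| G -> g \in G -> g \notin M -> x \in G ->
  exists i, x * (g ^+ i)^-1 \in M.
Proof.
move=> /maxgroupP [pMG maxM] /andP[sMG nMG] gG gM xG.
have ngM : <[g]> \subset 'N(M).
  by apply: subset_trans nMG; rewrite cycle_subG.
have sJG : M <*> <[g]> \subset G by rewrite join_subG sMG cycle_subG.
have : G \subset M <*> <[g]>.
  apply: contraR gM => nsub.
  have pJ : (M <*> <[g]>)%G \proper G by rewrite properE sJG nsub.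
  have := maxM _ pJ (joing_subl _ _) => /= <-.
  by rewrite mem_gen // inE cycle_id orbT.
rewrite norm_joinEr // => /subsetP /(_ x xG) /mulsgP [m y mM /cycleP [i ->] ->].
by exists i; rewrite mulgK.
Qed.

Lemma replace_genpos (gT : finGroupType) (G : {group gT}) (S : {set {group gT}}) (M M' : {group gT}) g :
  gen_pos G S -> M \in S -> g \in G -> g \notin M ->
  (forall L, L \in S -> L != M -> g \in L) ->
  g \notin M' -> (forall x, x \in G -> exists i, x * (g ^+ i)^-1 \in M') ->
  gen_pos G (M' |: (S :\ M)) /\ M' \notin S :\ M.
Proof.
move=> gpS MS gG gM gL gM' pw.
have nin : M' \notin S :\ M.
  apply/negP; rewrite !inE => /andP[ne M'S]; by rewrite (gL _ M'S ne) in gM'.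
split=> //; apply/genposP => L; case/setU1P => [-> | ].
  exists g; split => // L'; case/setU1P => [-> | ]; first by rewrite eqxx.
  by rewrite !inE => /andP[ne L'S] _; apply: gL.
rewrite !inE => /andP[LM LS].
have [gl [glG glL glo]] := (proj1 (genposP G S) gpS L LS).
have [i wM'] := pw gl glG.
have giL : forall L', L' \in S -> L' != M -> (g ^+ i)^-1 \in L'.
  by move=> L' L'S ne; rewrite groupV groupX // gL.
exists (gl * (g ^+ i)^-1); split.
- by rewrite groupM ?groupV ?groupX.
- by rewrite groupMr ?giL.
- move=> L'; case/setU1P => [-> //| ]; rewrite !inE => /andP[ne L'S] ne2.
  by rewrite groupM ?giL ?glo.
Qed.

Lemma Lstep (gT : finGroupType) (G M X : {group gT}) :
  maximal M G -> X <| G -> X \subset M \/ G \subset M * X.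
Proof.
move=> /maxgroupP [pMG maxM] /andP[sXG nXG].
have sMG := proper_sub pMG.
have nXM : M \subset 'N(X) by apply: subset_trans nXG.
have sJG : M <*> X \subset G by rewrite join_subG sMG.
have [sub|nsub] := boolP (G \subset M <*> X).
  by right; rewrite -(norm_joinEl nXM).
left; have pJ : (M <*> X)%G \proper G by rewrite properE sJG nsub.
by have := maxM _ pJ (joing_subl _ _) => /= <-; apply: joing_subr.
Qed.

Section Prod.
Variables (gT1 gT2 : finGroupType) (H : {group gT1}) (K : {group gT2}).

Lemma pairM (a b : gT1) (c d : gT2) : ((a, c) * (b, d) : gT1 * gT2) = (a * b, c * d).
Proof. by []. Qed.
Lemma pairV (a : gT1) (c : gT2) : ((a, c)^-1 : gT1 * gT2) = (a^-1, c^-1).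
Proof. by []. Qed.
Lemma pairJ (a b : gT1) (c d : gT2) : ((a, c) ^ (b, d) : gT1 * gT2) = (a ^ b, c ^ d).
Proof. by []. Qed.

Lemma normX (N : {group gT1}) (N' : {group gT2}) :
  N <| H -> N' <| K -> setX N N' <| setX H K.
Proof.
move=> /andP[sNH nNH] /andP[sNK nNK]; apply/andP; split; first by rewrite setXS.
apply/subsetP => [[h k]]; rewrite in_setX => /andP[hH kK].
rewrite inE sub_conjg; apply/subsetP => [[a b]] ab.
rewrite mem_conjg invgK pairJ in_setX.
move: ab; rewrite in_setX => /andP[aN bN].
by rewrite memJ_norm ?(subsetP nNH) // memJ_norm ?(subsetP nNK) // aN bN.
Qed.

Lemma setX_maxl (A : {group gT1}) : maximal A H -> maximal (setX A K) (setX H K).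
Proof.
move=> /maxgroupP [pAH maxA]; have [sAH [h hH hA]] := properP pAH.
apply/maxgroupP; split.
  apply/properP; split; first by rewrite setXS.
  by exists (h, 1); rewrite in_setX ?hH ?group1 // (negbTE hA).
move=> Y pY sAY.
pose A' := (H :&: pairg1 gT2 @*^-1 Y)%G.
have memA' a : (a \in A') = (a \in H) && ((a, 1) \in Y) by rewrite !inE.
have sAA' : A \subset A'.
  apply/subsetP => a aA; rewrite memA' (subsetP sAH) //=.
  by apply: (subsetP sAY); rewrite in_setX aA group1.
have pA' : A' \proper H.
  rewrite properE subsetIl /=; apply/negP => sHA'.
  move: pY; rewrite properE => /andP[_ /negP]; apply.
  apply/subsetP => [[a k]]; rewrite in_setX => /andP[aH kK].
  have -> : ((a, k) : gT1 * gT2) = (a, 1) * (1, k) by rewrite pairM mulg1 mul1g.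
  rewrite groupM //.
    by have := subsetP sHA' a aH; rewrite memA' => /andP[].
  by apply: (subsetP sAY); rewrite in_setX group1.
have eA := maxA _ pA' sAA'.
apply/eqP; rewrite eqEsubset sAY andbT.
apply/subsetP => [[a k]] akY.
have := subsetP (proper_sub pY) _ akY; rewrite in_setX => /andP[aH kK].
rewrite in_setX kK andbT -eA memA' aH /=.
have -> : ((a, 1) : gT1 * gT2) = (a, k) * (1, k)^-1 by rewrite pairV pairM invg1 mulg1 mulgV.
rewrite groupM ?groupV //; apply: (subsetP sAY); by rewrite in_setX group1.
Qed.

Lemma setX_maxr (B : {group gT2}) : maximal B K -> maximal (setX H B) (setX H K).
Proof.
move=> /maxgroupP [pBK maxB]; have [sBK [k kK kB]] := properP pBK.
apply/maxgroupP; split.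
  apply/properP; split; first by rewrite setXS.
  by exists (1, k); rewrite in_setX ?kK ?group1 // (negbTE kB) andbF.
move=> Y pY sBY.
pose B' := (K :&: @pair1g gT1 gT2 @*^-1 Y)%G.
have memB' b : (b \in B') = (b \in K) && ((1, b) \in Y) by rewrite !inE.
have sBB' : B \subset B'.
  apply/subsetP => b bB; rewrite memB' (subsetP sBK) //=.
  by apply: (subsetP sBY); rewrite in_setX bB group1.
have pB' : B' \proper K.
  rewrite properE subsetIl /=; apply/negP => sKB'.
  move: pY; rewrite properE => /andP[_ /negP]; apply.
  apply/subsetP => [[a b]]; rewrite in_setX => /andP[aH bK].
  have -> : ((a, b) : gT1 * gT2) = (a, 1) * (1, b) by rewrite pairM mulg1 mul1g.
  rewrite groupM //.
    by apply: (subsetP sBY); rewrite in_setX group1 aH.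
  by have := subsetP sKB' b bK; rewrite memB' => /andP[].
have eB := maxB _ pB' sBB'.
apply/eqP; rewrite eqEsubset sBY andbT.
apply/subsetP => [[a b]] abY.
have := subsetP (proper_sub pY) _ abY; rewrite in_setX => /andP[aH bK].
rewrite in_setX aH /= -eB memB' bK /=.
have -> : ((1, b) : gT1 * gT2) = (a, 1)^-1 * (a, b) by rewrite pairV pairM invg1 mul1g mulVg.
rewrite groupM ?groupV //; apply: (subsetP sBY); by rewrite in_setX group1 aH.
Qed.

End Prod.

Section Classify.
Variables (gT1 gT2 : finGroupType) (H : {group gT1}) (K : {group gT2}).

Definition prodform (M : {group gT1 * gT2}) : bool :=
  [exists A : {group gT1}, maximal A H && (M == setX_group A K)] ||
  [exists B : {group gT2}, maximal B K && (M == setX_group H B)].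

Hypothesis hyp : ~ common_nonab_simple_quotient H K.

Lemma classify (M : {group gT1 * gT2}) : maximal M (setX H K) ->
  prodform M \/ exists M1 M2 : {group gT1 * gT2},
   [&& prodform M1, prodform M2, maximal M1 (setX H K), M1 <| setX H K,
       maximal M2 (setX H K), M2 <| setX H K & M1 :&: M2 \subset M].
Proof.
move=> mM; have [pMG maxM] := maxgroupP mM; have sMG := proper_sub pMG.
pose N1 := (H :&: pairg1 gT2 @*^-1 M)%G.
pose N2 := (K :&: @pair1g gT1 gT2 @*^-1 M)%G.
have memN1 a : (a \in N1) = (a \in H) && ((a, 1) \in M) by rewrite !inE.
have memN2 b : (b \in N2) = (b \in K) && ((1, b) \in M) by rewrite !inE.
have inG x : x \in M -> x.1 \in H /\ x.2 \in K.
  by case: x => a b /(subsetP sMG); rewrite in_setX => /andP[].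
have [sHN1 | nsHN1] := boolP (H \subset N1).
  have eM : M :=: setX H N2.
    apply/eqP; rewrite eqEsubset; apply/andP; split; apply/subsetP => [[a b]].
      move=> abM; have [aH bK] := inG _ abM; rewrite in_setX aH memN2 bK /=.
      have a1M : (a, 1) \in M by have := subsetP sHN1 a aH; rewrite memN1 => /andP[].
      have -> : ((1, b) : gT1 * gT2) = (a, 1)^-1 * (a, b) by rewrite pairV pairM invg1 mul1g mulVg.
      by rewrite groupM ?groupV.
    rewrite in_setX memN2 => /andP[aH /andP[bK b1M]].
    have a1M : (a, 1) \in M by have := subsetP sHN1 a aH; rewrite memN1 => /andP[].
    have -> : ((a, b) : gT1 * gT2) = (a, 1) * (1, b) by rewrite pairM mulg1 mul1g.
    by rewrite groupM.
  left; apply/orP; right; apply/existsP; exists N2.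
  have -> : (M == setX_group H N2) by apply/eqP; apply: val_inj; exact: eM.
  rewrite andbT; apply/maxgroupP; split.
    rewrite properE subsetIl /=; apply/negP => sKN2.
    move: pMG; rewrite properE eM => /andP[_ /negP]; apply; by rewrite setXS.
  move=> Y pY sN2Y.
  have pHY : (setX_group H Y) \proper setX H K.
    apply/properP; split; first by rewrite setXS // (proper_sub pY).
    have [_ [k kK kY]] := properP pY.
    by exists (1, k); rewrite in_setX ?kK ?group1 // (negbTE kY) andbF.
  have sMY : M \subset setX_group H Y by rewrite eM setXS.
  have eHY := maxM _ pHY sMY.
  apply/eqP; rewrite eqEsubset sN2Y andbT; apply/subsetP => y yY.
  have : (1, y) \in setX_group H Y by rewrite /= in_setX group1 yY.
  by rewrite eHY => y1M; rewrite memN2 y1M (subsetP (proper_sub pY)).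
have [sKN2 | nsKN2] := boolP (K \subset N2).
  have eM : M :=: setX N1 K.
    apply/eqP; rewrite eqEsubset; apply/andP; split; apply/subsetP => [[a b]].
      move=> abM; have [aH bK] := inG _ abM; rewrite in_setX bK memN1 aH /= andbT.
      have b1M : (1, b) \in M by have := subsetP sKN2 b bK; rewrite memN2 => /andP[].
      have -> : ((a, 1) : gT1 * gT2) = (a, b) * (1, b)^-1 by rewrite pairV pairM invg1 mulg1 mulgV.
      by rewrite groupM ?groupV.
    rewrite in_setX memN1 => /andP[/andP[aH a1M] bK].
    have b1M : (1, b) \in M by have := subsetP sKN2 b bK; rewrite memN2 => /andP[].
    have -> : ((a, b) : gT1 * gT2) = (a, 1) * (1, b) by rewrite pairM mulg1 mul1g.
    by rewrite groupM.
  left; apply/orP; left; apply/existsP; exists N1.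
  have -> : (M == setX_group N1 K) by apply/eqP; apply: val_inj; exact: eM.
  rewrite andbT; apply/maxgroupP; split.
    rewrite properE subsetIl /=; apply/negP => sHN1'.
    by rewrite sHN1' in nsHN1.
  move=> Y pY sN1Y.
  have pYK : (setX_group Y K) \proper setX H K.
    apply/properP; split; first by rewrite setXS // (proper_sub pY).
    have [_ [h hH hY]] := properP pY.
    by exists (h, 1); rewrite in_setX ?hH ?group1 // (negbTE hY).
  have sMY : M \subset setX_group Y K by rewrite eM setXS.
  have eYK := maxM _ pYK sMY.
  apply/eqP; rewrite eqEsubset sN1Y andbT; apply/subsetP => y yY.
  have : (y, 1) \in setX_group Y K by rewrite /= in_setX group1 yY.
  by rewrite eYK => y1M; rewrite memN1 y1M (subsetP (proper_sub pY)).
have pi1 h : h \in H -> exists k, (h, k) \in M.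
  move=> hH; case: (Lstep mM (normX (normal1 H) (normal_refl K))) => [sub | sGM].
    exfalso; move/negP: nsKN2; apply; apply/subsetP => k kK; rewrite memN2 kK /=.
    by apply: (subsetP sub); rewrite in_setX group1 kK.
  have : (h, 1) \in M * setX 1 K by apply: (subsetP sGM); rewrite in_setX hH group1.
  case/mulsgP => m [y1 y2] mIn; rewrite in_setX => /andP[/set1P -> _] e.
  exists y2^-1.
  have -> : ((h, y2^-1) : gT1 * gT2) = (h, 1) * (1, y2)^-1 by rewrite pairV pairM invg1 mulg1 mul1g.
  by rewrite e mulgK.
have pi2 k : k \in K -> exists h, (h, k) \in M.
  move=> kK; case: (Lstep mM (normX (normal_refl H) (normal1 K))) => [sub | sGM].
    exfalso; move/negP: nsHN1; apply; apply/subsetP => h hH; rewrite memN1 hH /=.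
    by apply: (subsetP sub); rewrite in_setX group1 hH.
  have : (1, k) \in M * setX H 1 by apply: (subsetP sGM); rewrite in_setX kK group1.
  case/mulsgP => m [y1 y2] mIn; rewrite in_setX => /andP[_ /set1P ->] e.
  exists y1^-1.
  have -> : ((y1^-1, k) : gT1 * gT2) = (1, k) * (y1, 1)^-1 by rewrite pairV pairM invg1 mulg1 mul1g.
  by rewrite e mulgK.
have nN1 : N1 <| H.
  apply/andP; split; first exact: subsetIl.
  apply/subsetP => h hH; rewrite inE sub_conjg; apply/subsetP => n.
  rewrite mem_conjg invgK !memN1 => /andP[nH n1M]; rewrite groupJ //=.
  have [k hkM] := pi1 h hH.
  have -> : ((n ^ h, 1) : gT1 * gT2) = (n, 1) ^ (h, k) by rewrite pairJ conj1g.
  by rewrite groupJ.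
have nN2 : N2 <| K.
  apply/andP; split; first exact: subsetIl.
  apply/subsetP => k kK; rewrite inE sub_conjg; apply/subsetP => n.
  rewrite mem_conjg invgK !memN2 => /andP[nK n1M]; rewrite groupJ //=.
  have [h hkM] := pi2 k kK.
  have -> : ((1, n ^ k) : gT1 * gT2) = (1, n) ^ (h, k) by rewrite pairJ conj1g.
  by rewrite groupJ.
have mxN1 : maxnormal N1 H H.
  apply/maxgroupP; split.
    by rewrite properE subsetIl nsHN1 (normal_norm nN1).
  move=> X /andP[pXH nXH] sN1X.
  have nsXH : X <| H by rewrite /normal (proper_sub pXH) nXH.
  case: (Lstep mM (normX nsXH (normal1 K))) => [sub | sGM].
    apply/eqP; rewrite eqEsubset sN1X andbT; apply/subsetP => x xX.
    rewrite memN1 (subsetP (proper_sub pXH)) //=; apply: (subsetP sub).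
    by rewrite in_setX xX group1.
  exfalso; move: pXH; rewrite properE => /andP[_ /negP]; apply.
  apply/subsetP => h hH.
  have : (h, 1) \in M * setX X 1 by apply: (subsetP sGM); rewrite in_setX hH group1.
  case/mulsgP => m [x y2] mIn; rewrite in_setX => /andP[xX /set1P ->] e.
  have mE : m = (h, 1) * (x, 1)^-1 by rewrite e mulgK.
  rewrite pairV pairM invg1 mulg1 in mE.
  have : h * x^-1 \in N1.
    by rewrite memN1 -mE mIn andbT groupM ?groupV ?(subsetP (normal_sub nsXH) x xX).
  move/(subsetP sN1X) => hxX; have := groupM hxX xX; by rewrite mulgKV.
have mxN2 : maxnormal N2 K K.
  apply/maxgroupP; split.
    by rewrite properE subsetIl nsKN2 (normal_norm nN2).
  move=> X /andP[pXK nXK] sN2X.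
  have nsXK : X <| K by rewrite /normal (proper_sub pXK) nXK.
  case: (Lstep mM (normX (normal1 H) nsXK)) => [sub | sGM].
    apply/eqP; rewrite eqEsubset sN2X andbT; apply/subsetP => x xX.
    rewrite memN2 (subsetP (proper_sub pXK)) //=; apply: (subsetP sub).
    by rewrite in_setX xX group1.
  exfalso; move: pXK; rewrite properE => /andP[_ /negP]; apply.
  apply/subsetP => k kK.
  have : (1, k) \in M * setX 1 X by apply: (subsetP sGM); rewrite in_setX kK group1.
  case/mulsgP => m [y1 x] mIn; rewrite in_setX => /andP[/set1P -> xX] e.
  have mE : m = (1, k) * (1, x)^-1 by rewrite e mulgK.
  rewrite pairV pairM invg1 mulg1 in mE.
  have : k * x^-1 \in N2.
    by rewrite memN2 -mE mIn andbT groupM ?groupV ?(subsetP (normal_sub nsXK) x xX).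
  move/(subsetP sN2X) => kxX; have := groupM kxX xX; by rewrite mulgKV.
have simH : simple (H / N1) by rewrite quotient_simple.
pose f1 := [morphism of coset N1 \o @fst gT1 gT2].
pose f2 := [morphism of coset N2 \o @snd gT1 gT2].
have d1 : M \subset (fst_morphism gT1 gT2 @*^-1 'N(N1))%G.
  apply/subsetP => x xM; apply: mem_morphpre; first by rewrite inE.
  by apply: (subsetP (normal_norm nN1)); case: (inG x xM).
have d2 : M \subset (snd_morphism gT1 gT2 @*^-1 'N(N2))%G.
  apply/subsetP => x xM; apply: mem_morphpre; first by rewrite inE.
  by apply: (subsetP (normal_norm nN2)); case: (inG x xM).
have i1 := first_isog_loc f1 d1.
have i2 := first_isog_loc f2 d2.
have im1 : f1 @* M = H / N1.
  rewrite morphim_comp; suff -> : fst_morphism gT1 gT2 @* M = H by [].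
  rewrite morphimEsub ?subsetT //; apply/setP => h; apply/imsetP/idP => [[x xM ->]|hH].
    by case: (inG x xM).
  by have [k hk] := pi1 h hH; exists (h, k).
have im2 : f2 @* M = K / N2.
  rewrite morphim_comp; suff -> : snd_morphism gT1 gT2 @* M = K by [].
  rewrite morphimEsub ?subsetT //; apply/setP => k; apply/imsetP/idP => [[x xM ->]|kK].
    by case: (inG x xM).
  by have [h hk] := pi2 k kK; exists (h, k).
have ek : 'ker_M f1 = 'ker_M f2.
  rewrite /= !ker_comp !ker_coset.
  apply/setP => [[a b]]; rewrite !inE /=.
  apply/and3P/and3P => [[abM aH a1M]|[abM bK b1M]].
    have [_ bK] := inG _ abM; split => //.
    have -> : pair1g gT1 b = (a, 1)^-1 * (a, b) by rewrite /pair1g pairV pairM invg1 mul1g mulVg.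
    by rewrite groupM ?groupV.
  have [aH _] := inG _ abM; split => //.
  have -> : pairg1 gT2 a = (a, b) * (1, b)^-1 by rewrite /pairg1 pairV pairM invg1 mulg1 mulgV.
  by rewrite groupM ?groupV.
have iso : (H / N1) \isog (K / N2).
  rewrite -im1 -im2; apply: isog_trans (isog_symr i1) _; rewrite ek; exact: i2.
have [abH | nabH] := boolP (abelian (H / N1)); last first.
  by exfalso; apply: hyp; exists N1, N2; split.
have abK : abelian (K / N2) by rewrite -(isog_abelian iso).
have maxN1 : maximal N1 H.
  apply/maxgroupP; split; first by rewrite properE subsetIl.
  move=> X pXH sN1X.
  have nXH : H \subset 'N(X).
    apply: sub_der1_norm (proper_sub pXH); apply: subset_trans sN1X.
    by rewrite derg1 -quotient_cents2 ?(normal_norm nN1).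
  by have [_ mxP] := maxgroupP mxN1; apply: mxP; rewrite ?pXH.
have maxN2 : maximal N2 K.
  apply/maxgroupP; split; first by rewrite properE subsetIl.
  move=> X pXK sN2X.
  have nXK : K \subset 'N(X).
    apply: sub_der1_norm (proper_sub pXK); apply: subset_trans sN2X.
    by rewrite derg1 -quotient_cents2 ?(normal_norm nN2).
  by have [_ mxP] := maxgroupP mxN2; apply: mxP; rewrite ?pXK.
right; exists (setX_group N1 K), (setX_group H N2).
apply/and5P; split.
- by apply/orP; left; apply/existsP; exists N1; rewrite maxN1 eqxx.
- by apply/orP; right; apply/existsP; exists N2; rewrite maxN2 eqxx.
- exact: setX_maxl.
- exact: normX nN1 (normal_refl K).
- apply/and3P; split.
  + exact: setX_maxr.
  + exact: normX (normal_refl H) nN2.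
  + apply/subsetP => [[a b]]; rewrite inE !in_setX => /andP[/andP[aN1 _] /andP[_ bN2]].
    move: aN1 bN2; rewrite memN1 memN2 => /andP[_ a1M] /andP[_ b1M].
    have -> : ((a, b) : gT1 * gT2) = (a, 1) * (1, b) by rewrite pairM mulg1 mul1g.
    by rewrite groupM.
Qed.
End Classify.

Section Main.
Variables (gT1 gT2 : finGroupType) (H : {group gT1}) (K : {group gT2}).

Lemma setXl_inj (A A' : {group gT1}) :
  (setX_group A' K == setX_group A K) = (A' == A).
Proof.
apply/eqP/eqP => [e|->//]; apply: val_inj => /=; apply/setP => a.
by have := congr1 (fun G : {group gT1 * gT2} => (a, 1) \in G) e; rewrite /= !in_setX group1 !andbT.
Qed.

Lemma setXr_inj (B B' : {group gT2}) :
  (setX_group H B' == setX_group H B) = (B' == B).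
Proof.
apply/eqP/eqP => [e|->//]; apply: val_inj => /=; apply/setP => b.
by have := congr1 (fun G : {group gT1 * gT2} => (1, b) \in G) e; rewrite /= !in_setX group1.
Qed.

Lemma base (S : {set {group gT1 * gT2}}) :
  (forall M, M \in S -> prodform H K M) -> gen_pos (setX H K) S ->
  #|S| <= MaxDim H + MaxDim K.
Proof.
move=> hS gpS.
pose T1 := [set A : {group gT1} | maximal A H && (setX_group A K \in S)].
pose T2 := [set B : {group gT2} | maximal B K && (setX_group H B \in S)].
have sS : S \subset (fun A => setX_group A K) @: T1 :|: (fun B => setX_group H B) @: T2.
  apply/subsetP => M MS.
  have /orP[/existsP[A /andP[mA /eqP eM]] | /existsP[B /andP[mB /eqP eM]]] := hS M MS.
    by rewrite inE; apply/orP; left; apply/imsetP; exists A => //; rewrite inE mA -eM MS.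
  by rewrite inE; apply/orP; right; apply/imsetP; exists B => //; rewrite inE mB -eM MS.
have c1 : #|T1| <= MaxDim H.
  rewrite /MaxDim; apply: (leq_bigmax_cond T1).
  apply/andP; split.
    by apply/subsetP => A; rewrite !inE => /andP[mA _].
  apply/genposP => A; rewrite inE => /andP[mA AS].
  have [[h k] [gG gM gL]] := proj1 (genposP _ S) gpS _ AS.
  move: gG gM; rewrite !in_setX => /andP[hH kK]; rewrite kK andbT => hA.
  exists h; split => // A'; rewrite inE => /andP[mA' A'S] ne.
  by have := gL _ A'S; rewrite setXl_inj ne => /(_ isT); rewrite /= in_setX => /andP[].
have c2 : #|T2| <= MaxDim K.
  rewrite /MaxDim; apply: (leq_bigmax_cond T2).
  apply/andP; split.
    by apply/subsetP => B; rewrite !inE => /andP[mB _].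
  apply/genposP => B; rewrite inE => /andP[mB BS].
  have [[h k] [gG gM gL]] := proj1 (genposP _ S) gpS _ BS.
  move: gG gM; rewrite !in_setX => /andP[hH kK]; rewrite hH /= => kB.
  exists k; split => // B'; rewrite inE => /andP[mB' B'S] ne.
  by have := gL _ B'S; rewrite setXr_inj ne => /(_ isT); rewrite /= in_setX => /andP[].
apply: leq_trans (subset_leq_card sS) _.
apply: leq_trans (leq_card_setU _ _) _.
by apply: leq_add; apply: leq_trans (leq_imset_card _ _) _.
Qed.

Hypothesis hyp : ~ common_nonab_simple_quotient H K.

Lemma ub n (S : {set {group gT1 * gT2}}) :
  #|[set M in S | ~~ prodform H K M]| <= n ->
  (forall M, M \in S -> maximal M (setX H K)) -> gen_pos (setX H K) S ->
  #|S| <= MaxDim H + MaxDim K.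
Proof.
elim: n S => [|n IH] S cnt mS gpS;
  (case: (pickP [pred M | (M \in S) && ~~ prodform H K M]) => [M /andP[MS npM] | none];
   [ | apply: base => // M MS; have := none M; rewrite /= MS /=; by move/negbFE ]).
- have : 0 < #|[set M in S | ~~ prodform H K M]|.
    by apply/card_gt0P; exists M; rewrite inE MS.
  by rewrite leqn0 in cnt; rewrite (eqP cnt).
- have [g [gG gM gL]] := proj1 (genposP _ S) gpS _ MS.
  case: (classify hyp (mS M MS)) => [pM | [M1 [M2 /and5P[p1 p2 m1 n1 /and3P[m2 n2 sub]]]]].
    by rewrite pM in npM.
  have [M' [pM' mM' nM' gM']] : exists M' : {group gT1 * gT2},
      [/\ prodform H K M', maximal M' (setX H K), M' <| setX H K & g \notin M'].
    have [g1|g1] := boolP (g \in M1); last by exists M1.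
    have [g2|g2] := boolP (g \in M2); last by exists M2.
    by move: gM; rewrite (subsetP sub) // inE g1 g2.
  have [gpS' nin] := replace_genpos gpS MS gG gM gL gM'
     (fun x xG => maxnormal_pow mM' nM' gG gM' xG).
  apply: leq_trans (IH (M' |: (S :\ M)) _ _ gpS').
  + by rewrite cardsU1 nin (cardsD1 M S) MS.
  + apply: leq_trans (subset_leq_card (_ : _ \subset [set L in S | ~~ prodform H K L] :\ M)) _.
      apply/subsetP => L; rewrite !inE => /andP[/orP[/eqP -> | /andP[ne LS]] npL].
        by rewrite pM' in npL.
      by rewrite ne LS npL.
    move: cnt; rewrite (cardsD1 M [set L in S | ~~ prodform H K L]) inE MS npM.
    by rewrite add1n ltnS.
  + move=> L; rewrite !inE => /orP[/eqP -> // | /andP[_ LS]]; exact: mS.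
Qed.

End Main.

Section Lower.
Variables (gT1 gT2 : finGroupType) (H : {group gT1}) (K : {group gT2}).

Lemma MaxDim_arg (gT : finGroupType) (G : {group gT}) :
  exists2 T : {set {group gT}},
    (T \subset [set M : {group gT} | maximal M G]) && gen_pos G T & MaxDim G = #|T|.
Proof.
have P0 : (set0 \subset [set M : {group gT} | maximal M G]) && gen_pos G set0.
  by rewrite sub0set; apply/forallP => M; rewrite inE.
exists [arg max_(S > set0 | (S \subset [set M : {group gT} | maximal M G]) && gen_pos G S) #|S|].
  by case: arg_maxnP.
exact: bigmax_eq_arg.
Qed.

Lemma lb : MaxDim H + MaxDim K <= MaxDim (setX H K).
Proof.
have [T1 /andP[s1 g1] ->] := MaxDim_arg H.
have [T2 /andP[s2 g2] ->] := MaxDim_arg K.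
pose S := (fun A => setX_group A K) @: T1 :|: (fun B => setX_group H B) @: T2.
have mT1 A : A \in T1 -> maximal A H by move/(subsetP s1); rewrite inE.
have mT2 B : B \in T2 -> maximal B K by move/(subsetP s2); rewrite inE.
have cS : #|S| = #|T1| + #|T2|.
  rewrite cardsU !card_in_imset; first last.
  - by move=> A A' _ _ /eqP; rewrite setXl_inj => /eqP.
  - by move=> B B' _ _ /eqP; rewrite setXr_inj => /eqP.
  suff -> : #|(fun A => setX_group A K) @: T1 :&: (fun B => setX_group H B) @: T2| = 0.
    by rewrite subn0.
  apply/eqP; rewrite cards_eq0; apply/eqP/setP => M; rewrite !inE.
  apply/negP => /andP[/imsetP[A AT1 ->] /imsetP[B BT2 e]].
  have /maxgroupP[/properP[_ [h hH hA]] _] := mT1 A AT1.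
  have := congr1 (fun G : {group gT1 * gT2} => (h, 1) \in G) e.
  by move=> /=; rewrite !in_setX hH group1 (negbTE hA) /= group1.
rewrite -cS /MaxDim; apply: (leq_bigmax_cond S); apply/andP; split.
  apply/subsetP => M; rewrite !inE => /orP[/imsetP[A AT1 ->] | /imsetP[B BT2 ->]].
    exact: setX_maxl (mT1 A AT1).
  exact: setX_maxr (mT2 B BT2).
apply/genposP => M; rewrite inE => /orP[/imsetP[A AT1 ->] | /imsetP[B BT2 ->]].
  have [h [hH hA hL]] := proj1 (genposP _ T1) g1 A AT1.
  exists (h, 1); split; first by rewrite in_setX hH group1.
    by rewrite /= in_setX (negbTE hA).
  move=> L; rewrite inE => /orP[/imsetP[A' A'T1 ->] | /imsetP[B BT2 ->]] ne.
    by rewrite /= in_setX group1 andbT hL // -(setXl_inj K).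
  by rewrite /= in_setX hH group1.
have [k [kK kB kL]] := proj1 (genposP _ T2) g2 B BT2.
exists (1, k); split; first by rewrite in_setX kK group1.
  by rewrite /= in_setX (negbTE kB) andbF.
move=> L; rewrite inE => /orP[/imsetP[A AT1 ->] | /imsetP[B' B'T2 ->]] ne.
  by rewrite /= in_setX kK group1.
by rewrite /= in_setX group1 kL // -(setXr_inj H).
Qed.

End Lower.

Close Scope group_scope.
Unset Implicit Arguments.

Theorem theorem2p3 (gT1 gT2 : finGroupType) (H : {group gT1}) (K : {group gT2}) :
  ~ common_nonab_simple_quotient H K ->
  MaxDim (setX H K) = MaxDim H + MaxDim K.
Proof.
move=> hyp; apply/eqP; rewrite eqn_leq lb andbT.
apply/bigmax_leqP => S /andP[sS gp].
apply: (ub hyp (leqnn _)) => // M /(subsetP sS); by rewrite inE.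
Qed.
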